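(* Let $f\in\mathcal L^1_1([0,1])$ be such that $\ln(n)\cdot\widehat T_1^n(f)\to\int f\,\mathrm{d}\mu_1$ uniformly on $Y=[1/2,1]$ as $n\to\infty$. Then $\ln(n)\cdot\widehat T_1^n(f)\to\int f\,\mathrm d\mu_1$ uniformly on every compact subset of $(0,1]$.
   Context: $T_1$ is the Farey map with inverse branches $f_{1,0}(x)=\frac x{1+x}$, $f_{1,1}(x)=\frac1{1+x}$; $\mathcal P_1 f=|f_{1,0}'|\,f\circ f_{1,0}+|f_{1,1}'|\,f\circ f_{1,1}$; $\mu_1$ is the measure with density $h_1(x)=1/x$ and $\mathcal L^1_1([0,1])$ the $\mu_1$-integrable functions; $\widehat T_1(f)=\mathcal P_1(fh_1)/h_1$. *)

(* Defs.v *)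
From Stdlib Require Import Reals Lra Rtopology RiemannInt_SF.
Open Scope R_scope.

Definition null_set (N : R -> Prop) : Prop :=
  forall eps, 0 < eps ->
    exists a b : nat -> R,
      (forall k, a k <= b k) /\
      (forall x, N x -> exists k, a k < x < b k) /\
      (forall n, sum_f_R0 (fun k => b k - a k) n <= eps).

(* g belongs to the Riesz class L^+ on [0,1] with integral J: g is the a.e.
   limit of an a.e. increasing sequence of step functions whose integrals
   converge to J. *)
Definition upper_int (g : R -> R) (J : R) : Prop :=
  exists (phi : nat -> StepFun 0 1) (N : R -> Prop),
    null_set N /\
    (forall x, 0 <= x <= 1 -> ~ N x ->
       (forall n, phi n x <= phi (S n) x) /\
       Un_cv (fun n => phi n x) (g x)) /\
    Un_cv (fun n => RiemannInt_SF (phi n)) J.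

Definition leb_int01 (g : R -> R) (I : R) : Prop :=
  exists g1 g2 J1 J2 N,
    upper_int g1 J1 /\ upper_int g2 J2 /\ null_set N /\
    (forall x, 0 <= x <= 1 -> ~ N x -> g x = g1 x - g2 x) /\
    I = J1 - J2.

Definition h1 (x : R) : R := 1 / x.

(* inverse branches and their derivatives *)
Definition f10 (x : R) : R := x / (1 + x).
Definition f11 (x : R) : R := 1 / (1 + x).
Definition df10 (x : R) : R := 1 / (1 + x) ^ 2.
Definition df11 (x : R) : R := - (1 / (1 + x) ^ 2).

(* mu_1 has density h1 w.r.t. Lebesgue measure on [0,1]:
   f in L^1(mu_1) with integral I  iff  f*h1 Lebesgue integrable with integral I *)
Definition mu1_int (f : R -> R) (I : R) : Prop :=
  leb_int01 (fun x => f x * h1 x) I.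

Definition P1 (g : R -> R) (x : R) : R :=
  Rabs (df10 x) * g (f10 x) + Rabs (df11 x) * g (f11 x).

Definition T1hat (f : R -> R) (x : R) : R :=
  P1 (fun y => f y * h1 y) x / h1 x.

Definition unif_conv_on (S : R -> Prop) (f : R -> R) (c : R) : Prop :=
  forall eps, 0 < eps -> exists N : nat, forall n : nat, (N <= n)%nat ->
    forall x, S x -> Rabs (ln (INR n) * Nat.iter n T1hat f x - c) < eps.

(* Main.v *)
Require Import Defs.
From Stdlib Require Import Reals Rtopology.
From Stdlib Require Import Lra Lia List.
Open Scope R_scope.

Lemma T1hat_eq g x : 0 < x ->
  T1hat g x = g (f10 x) / (1 + x) + x * g (f11 x) / (1 + x).
Proof.
  intros Hx. unfold T1hat, P1, h1, df10, df11, f10, f11.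
  rewrite Rabs_Ropp.
  rewrite Rabs_right.
  2:{ apply Rle_ge; unfold Rdiv; rewrite Rmult_1_l; left; apply Rinv_0_lt_compat.
      apply pow_lt; lra. }
  field; lra.
Qed.

Lemma unif_mono (S S' : R -> Prop) f I :
  (forall x, S x -> S' x) -> unif_conv_on S' f I -> unif_conv_on S f I.
Proof.
  intros HS H eps He. destruct (H eps He) as [N HN]. exists N.
  intros n Hn x Hx. apply HN; auto.
Qed.

Lemma ln_le' x y : 0 < x -> x <= y -> ln x <= ln y.
Proof.
  intros Hx Hxy. destruct (Rle_lt_or_eq_dec _ _ Hxy) as [h|h].
  - left; apply ln_increasing; auto.
  - subst; lra.
Qed.

Lemma ln_diff t : 1 <= t -> 0 <= ln (t+1) - ln t <= 1/t.
Proof.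
  intros Ht. split.
  - assert (ln t <= ln (t+1)) by (apply ln_le'; lra). lra.
  - destruct (Rle_or_lt (ln (t+1) - ln t) (1/t)) as [h|h]; auto.
    exfalso.
    assert (E : exp (ln (t+1) - ln t) = (t+1)/t).
    { unfold Rminus. rewrite exp_plus, exp_Ropp, !exp_ln by lra. field; lra. }
    assert (h1 := exp_increasing _ _ h).
    assert (h2 : 1 + 1/t < exp (1/t)).
    { apply exp_ineq1. unfold Rdiv; rewrite Rmult_1_l.
      apply Rgt_not_eq, Rinv_0_lt_compat; lra. }
    rewrite E in h1.
    assert ((t+1)/t = 1 + 1/t) by (field; lra). lra.
Qed.

Lemma ln2_pos : 0 < ln 2.
Proof. rewrite <- ln_1. apply ln_increasing; lra. Qed.

Lemma step f I a : 0 < a <= 1/2 ->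
  unif_conv_on (fun x => a <= x <= 1) f I ->
  unif_conv_on (fun x => a/(1+a) <= x <= 1) f I.
Proof.
  intros Ha H eps He.
  assert (Hm : 0 < Rmin (eps/4) 1) by (apply Rmin_glb_lt; lra).
  destruct (H _ Hm) as [N HN].
  assert (HI : 0 < Rabs I + 1) by (pose proof (Rabs_pos I); lra).
  assert (Ht : 0 < eps * ln 2 / (8 * (Rabs I + 1))).
  { pose proof ln2_pos. unfold Rdiv. apply Rmult_lt_0_compat.
    - apply Rmult_lt_0_compat; lra.
    - apply Rinv_0_lt_compat; lra. }
  destruct (archimed_cor1 _ Ht) as [M [HM HM0]].
  exists (N + M)%nat. intros n Hn z [Hz1 Hz2].
  destruct (Rle_or_lt a z) as [hz|hz].
  { specialize (HN n ltac:(lia) z (conj hz Hz2)).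
    pose proof (Rmin_l (eps/4) 1). lra. }
  assert (Haa : 0 < a/(1+a)) by (unfold Rdiv; apply Rmult_lt_0_compat; [lra|apply Rinv_0_lt_compat; lra]).
  assert (Hz0 : 0 < z) by lra.
  set (x := z/(1-z)).
  assert (Hx0 : 0 < x) by (unfold x, Rdiv; apply Rmult_lt_0_compat; [lra|apply Rinv_0_lt_compat; lra]).
  assert (Hx1 : x <= 1).
  { unfold x. apply (Rmult_le_reg_r (1-z)); [lra|].
    unfold Rdiv; rewrite Rmult_assoc, Rinv_l, Rmult_1_r by lra. lra. }
  assert (Hza : a <= z * (1+a)).
  { assert (a = a/(1+a)*(1+a)) by (field; lra).
    rewrite H0 at 1. apply Rmult_le_compat_r; lra. }
  assert (Hxa : a <= x).
  { unfold x. apply (Rmult_le_reg_r (1-z)); [lra|].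
    unfold Rdiv; rewrite Rmult_assoc, Rinv_l, Rmult_1_r by lra. lra. }
  assert (Ef10 : f10 x = z) by (unfold f10, x; field; lra).
  assert (Ef11 : f11 x = 1 - z) by (unfold f11, x; field; lra).
  set (G := fun k => Nat.iter k T1hat f).
  assert (Eit : G (S n) x = G n z / (1+x) + x * G n (1-z) / (1+x)).
  { unfold G. simpl Nat.iter. rewrite T1hat_eq by lra. rewrite Ef10, Ef11. reflexivity. }
  assert (Ez : G n z = (1+x) * G (S n) x - x * G n (1-z)).
  { rewrite Eit. field. lra. }
  assert (HA := HN (S n) ltac:(lia) x (conj Hxa Hx1)).
  assert (HB := HN n ltac:(lia) (1-z) (conj (ltac:(lra) : a <= 1 - z) (ltac:(lra) : 1 - z <= 1))).
  fold (G (S n)) in HA. fold (G n) in HB. fold (G n).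
  set (L1 := ln (INR n)) in *. set (L2 := ln (INR (S n))) in *.
  set (A := L2 * G (S n) x) in *. set (B := L1 * G n (1-z)) in *.
  assert (Hn1 : 1 <= INR n).
  { replace 1 with (INR 1) by reflexivity. apply le_INR. lia. }
  assert (HL2 : ln 2 <= L2).
  { unfold L2. apply ln_le'; [lra|]. rewrite S_INR. lra. }
  pose proof ln2_pos.
  assert (Hd := ln_diff (INR n) Hn1).
  rewrite <- S_INR in Hd. fold L1 L2 in Hd.
  set (d := L2 - L1) in *.
  assert (Hdn : d < eps * ln 2 / (8 * (Rabs I + 1))).
  { eapply Rle_lt_trans; [apply Hd|]. eapply Rle_lt_trans; [|apply HM].
    unfold Rdiv; rewrite Rmult_1_l. apply Rinv_le_contravar.
    - apply lt_0_INR; lia.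
    - apply le_INR; lia. }
  set (P := d / L2).
  assert (HP0 : 0 <= P) by (unfold P, Rdiv; apply Rmult_le_pos; [lra|left; apply Rinv_0_lt_compat; lra]).
  assert (HP1 : P * (Rabs I + 1) < eps / 8).
  { assert (P <= d / ln 2).
    { unfold P, Rdiv. apply Rmult_le_compat_l; [lra|]. apply Rinv_le_contravar; lra. }
    assert (d / ln 2 < eps / (8 * (Rabs I + 1))).
    { apply (Rmult_lt_reg_r (ln 2)); [lra|].
      replace (d / ln 2 * ln 2) with d by (field; lra).
      replace (eps / (8 * (Rabs I + 1)) * ln 2) with (eps * ln 2 / (8 * (Rabs I + 1))) by (field; lra).
      lra. }
    assert (HQ : P * (Rabs I + 1) < eps / (8 * (Rabs I + 1)) * (Rabs I + 1)).
    { apply Rmult_lt_compat_r; lra. }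
    replace (eps / (8 * (Rabs I + 1)) * (Rabs I + 1)) with (eps/8) in HQ by (field; lra).
    exact HQ. }
  assert (E : L1 * G n z - I = (1+x)*(A - I) - (1+x)*P*A - x*(B - I)).
  { rewrite Ez. unfold A, B, P, d. field. lra. }
  rewrite E.
  pose proof (Rmin_l (eps/4) 1). pose proof (Rmin_r (eps/4) 1).
  assert (HAb : Rabs A <= Rabs I + 1).
  { replace A with ((A - I) + I) by ring.
    eapply Rle_trans; [apply Rabs_triang|]. lra. }
  assert (T1 : Rabs ((1+x)*(A-I)) <= 2 * Rabs (A - I)).
  { rewrite Rabs_mult, (Rabs_right (1+x)) by lra.
    apply Rmult_le_compat_r; [apply Rabs_pos|lra]. }
  assert (T2 : Rabs ((1+x)*P*A) <= 2 * (P * (Rabs I + 1))).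
  { rewrite !Rabs_mult, (Rabs_right (1+x)), (Rabs_right P) by lra.
    rewrite Rmult_assoc. apply Rmult_le_compat; try lra.
    - apply Rmult_le_pos; [lra|apply Rabs_pos].
    - apply Rmult_le_compat_l; lra. }
  assert (T3 : Rabs (x*(B-I)) <= Rabs (B - I)).
  { rewrite Rabs_mult, (Rabs_right x) by lra.
    pose proof (Rabs_pos (B-I)). nra. }
  unfold Rminus at 1.
  eapply Rle_lt_trans; [apply Rabs_triang|].
  rewrite Rabs_Ropp.
  unfold Rminus at 1.
  assert (Rabs ((1 + x) * (A - I) + - ((1 + x) * P * A)) <=
          Rabs ((1 + x) * (A - I)) + Rabs ((1 + x) * P * A)).
  { eapply Rle_trans; [apply Rabs_triang|]. rewrite Rabs_Ropp. lra. }
  lra.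
Qed.

Lemma all_k f I :
  unif_conv_on (fun x => 1/2 <= x <= 1) f I ->
  forall k : nat, unif_conv_on (fun x => 1/(INR k + 2) <= x <= 1) f I.
Proof.
  intros H k. induction k.
  - eapply unif_mono; [|exact H]. simpl. intros x Hx.
    replace (1/(0+2)) with (1/2) in Hx by field. exact Hx.
  - pose proof (pos_INR k).
    assert (Ha : 0 < 1/(INR k + 2) <= 1/2).
    { split.
      - unfold Rdiv; rewrite Rmult_1_l; apply Rinv_0_lt_compat; lra.
      - unfold Rdiv; rewrite !Rmult_1_l; apply Rinv_le_contravar; lra. }
    eapply unif_mono; [|exact (step f I _ Ha IHk)].
    intros x Hx.
    replace (1 / (INR k + 2) / (1 + 1 / (INR k + 2))) with (1/(INR (S k) + 2)).
    + exact Hx.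
    + rewrite S_INR. field. lra.
Qed.

Lemma list_min (l : list R) : (forall x, In x l -> 0 < x) ->
  exists m, 0 < m /\ forall x, In x l -> m <= x.
Proof.
  induction l as [|a l IH]; intros H.
  - exists 1. split; [lra|]. intros x [].
  - destruct IH as [m [Hm Hl]].
    { intros x Hx; apply H; right; auto. }
    assert (Ha : 0 < a) by (apply H; left; auto).
    exists (Rmin a m). split; [apply Rmin_glb_lt; auto|].
    intros x [Hx|Hx].
    + subst. apply Rmin_l.
    + eapply Rle_trans; [apply Rmin_r|auto].
Qed.

Lemma compact_lb (K : R -> Prop) : compact K -> (forall x, K x -> 0 < x) ->
  exists m, 0 < m /\ forall x, K x -> m <= x.
Proof.
  intros HK Hpos.
  assert (cf : forall x, (exists y, 0 < x /\ x < y) -> 0 < x).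
  { intros x [y [h _]]; exact h. }
  set (F := mkfamily (fun x => 0 < x) (fun x y => 0 < x /\ x < y) cf).
  assert (Hc : covering_open_set K F).
  { split.
    - intros y Hy. exists (y/2). simpl. specialize (Hpos y Hy). lra.
    - intros x y [h1 h2].
      assert (hp : 0 < y - x) by lra.
      exists (mkposreal _ hp). intros w Hw. unfold disc in Hw. simpl in Hw.
      split; auto. apply Rabs_def2 in Hw. lra. }
  destruct (HK F Hc) as [D [Hcov [l Hl]]].
  destruct (list_min l) as [m [Hm Hlm]].
  { intros x Hx. apply Hl in Hx. destruct Hx as [h _]. exact h. }
  exists m. split; auto. intros y Hy.
  destruct (Hcov y Hy) as [x [[h1 h2] hD]].
  assert (In x l) by (apply Hl; split; auto).
  specialize (Hlm x H). lra.
Qed.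

Theorem theorem4p15 (f : R -> R) (I : R) :
  mu1_int f I ->
  unif_conv_on (fun x => 1/2 <= x <= 1) f I ->
  forall K : R -> Prop,
    compact K -> (forall x, K x -> 0 < x <= 1) ->
    unif_conv_on K f I.
Proof.
  intros _ H K HK HK1.
  destruct (compact_lb K HK) as [m [Hm Hlb]].
  { intros x Hx; apply HK1; auto. }
  destruct (archimed_cor1 m Hm) as [N [HN HN0]].
  eapply unif_mono; [|exact (all_k f I H N)].
  intros x Hx. split; [|apply HK1; auto].
  specialize (Hlb x Hx).
  assert (1 / (INR N + 2) <= / INR N).
  { unfold Rdiv; rewrite Rmult_1_l. apply Rinv_le_contravar.
    - apply lt_0_INR; lia.
    - lra. }
  lra.
Qed.
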